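(* Let $f$ be a stable update function. Suppose the configuration $\mathcal U^{(t)}=(\vec u_1^{(t)},\dots,\vec u_n^{(t)})$ is strictly convex with coefficients $b_1,\dots,b_n\in\{-1,1\}$, i.e. $\langle b_i\vec u_i^{(t)},b_j\vec u_j^{(t)}\rangle>0$ for all $i,j\in[n]$, and let $\mathcal U^{(t+1)}$ be obtained from $\mathcal U^{(t)}$ by a single interaction. Then $\langle b_i\vec u_i^{(t+1)},b_j\vec u_j^{(t+1)}\rangle>0$ for all $i,j\in[n]$; in particular $\mathcal U^{(t+1)}$ is strictly convex with the same coefficients.
   Context: Opinions are unit vectors in $\mathbb R^d$; a configuration is an $n$-tuple, $A_{ij}=\langle\vec u_i,\vec u_j\rangle$. An interaction $(i,j)$, $i\ne j$, replaces $\vec u_i$ by $\vec w/\|\vec w\|$ with $\vec w=\vec u_i+f(A_{ij})\vec u_j$, leaving other opinions unchanged. $f:[-1,1]\to\mathbb R$ is stable if continuous and $\operatorname{sign}f(A)=\operatorname{sign}A$ for all $A$. A configuration is strictly convex if there exist $b_1,\dots,b_n\in\{\pm1\}$ with $\langle b_i\vec u_i,b_j\vec u_j\rangle>0$ for all $i,j$. *)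

(* Defs.v *)
From HB Require Import structures.
From mathcomp Require Import all_boot all_order all_algebra.
Set Implicit Arguments. Unset Strict Implicit. Unset Printing Implicit Defensive.
Import Order.TTheory GRing.Theory Num.Theory.
Local Open Scope ring_scope.

(* Opinions are vectors in R^d represented as row vectors 'rV[R]_d,
   over an arbitrary real closed field R (e.g. the reals). *)

Definition inner (R : rcfType) (d : nat) (u v : 'rV[R]_d) : R :=
  (u *m v^T) 0 0.

Definition vnorm (R : rcfType) (d : nat) (u : 'rV[R]_d) : R :=
  Num.sqrt (inner u u).

Definition is_unit_vec (R : rcfType) (d : nat) (u : 'rV[R]_d) : Prop :=
  inner u u = 1.

Definition config (R : rcfType) (d n : nat) := 'I_n -> 'rV[R]_d.

Definition is_config (R : rcfType) (d n : nat) (U : config R d n) : Prop :=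
  forall k, is_unit_vec (U k).

Definition stable (R : rcfType) (f : R -> R) : Prop :=
  {in `[-1, 1], forall A, Num.sg (f A) = Num.sg A} /\
  (forall x, -1 <= x <= 1 -> forall e : R, 0 < e ->
     exists2 del : R, 0 < del &
       forall y, -1 <= y <= 1 -> `|y - x| < del -> `|f y - f x| < e).

Definition interact (R : rcfType) (d n : nat) (f : R -> R)
  (U : config R d n) (i j : 'I_n) : config R d n :=
  fun k => if k == i then
    let w := U i + f (inner (U i) (U j)) *: U j in (vnorm w)^-1 *: w
  else U k.

Definition is_sign (R : rcfType) (b : R) : Prop := b = 1 \/ b = -1.

Definition strictly_convex_with (R : rcfType) (d n : nat)
  (U : config R d n) (b : 'I_n -> R) : Prop :=
  (forall k, is_sign (b k)) /\
  forall i j, 0 < inner (b i *: U i) (b j *: U j).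

(* Main.v *)
Require Import Defs.
From HB Require Import structures.
From mathcomp Require Import all_boot all_order all_algebra.
From mathcomp Require Import ring lra.
Import Order.TTheory GRing.Theory Num.Theory.
Local Open Scope ring_scope.

Section S.
Context {R : rcfType} {d : nat}.
Implicit Types u v w : 'rV[R]_d.
Lemma innerE u v : inner u v = \sum_k u 0 k * v 0 k.
Proof. by rewrite /inner !mxE; apply: eq_bigr => k _; rewrite mxE. Qed.
Lemma innerC u v : inner u v = inner v u.
Proof. by rewrite !innerE; apply: eq_bigr => k _; rewrite mulrC. Qed.
Lemma innerDl u v w : inner (u + v) w = inner u w + inner v w.
Proof. by rewrite !innerE -big_split; apply: eq_bigr => k _; rewrite mxE mulrDl. Qed.
Lemma innerZl a u w : inner (a *: u) w = a * inner u w.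
Proof. by rewrite !innerE mulr_sumr; apply: eq_bigr => k _; rewrite mxE mulrA. Qed.
Lemma innerDr u v w : inner w (u + v) = inner w u + inner w v.
Proof. by rewrite innerC innerDl !(innerC w). Qed.
Lemma innerZr a u w : inner w (a *: u) = a * inner w u.
Proof. by rewrite innerC innerZl innerC. Qed.
Lemma inner_ge0 u : 0 <= inner u u.
Proof. by rewrite innerE; apply: sumr_ge0 => k _; rewrite -expr2 sqr_ge0. Qed.
End S.

Theorem mainTheorem16 (R : rcfType) (d n : nat) (f : R -> R)
  (U : config R d n) (b : 'I_n -> R) (i j : 'I_n) :
  stable f -> is_config U -> i != j ->
  strictly_convex_with U b ->
  strictly_convex_with (interact f U i j) b.
Proof.
move=> [fsg _] hU nij [hs hpos]; split => // k l.
have hb : forall k, b k * b k = 1 by move=> m; case: (hs m) => ->; ring.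
have hP : forall k l, 0 < b k * b l * inner (U k) (U l).
  by move=> m p; have := hpos m p; rewrite innerZl innerZr mulrA.
set A := inner (U i) (U j).
have hAi : inner (U i) (U i) = 1 := hU i.
have hAj : inner (U j) (U j) = 1 := hU j.
have hji : inner (U j) (U i) = A by rewrite innerC.
have h1 := inner_ge0 (R:=R) (U i + U j).
have h2 := inner_ge0 (R:=R) (U i + (-1) *: U j).
rewrite !(innerDl, innerDr, innerZl, innerZr) hAi hAj hji -/A in h1 h2.
have hAin : A \in `[-1, 1] by rewrite in_itv /=; apply/andP; split; lra.
have hsg := fsg A hAin.
set a := f A.
have hA0 : A != 0.
  apply/eqP => A0; have := hP i j; rewrite -/A A0 mulr0; lra.
have haA : 0 < a * A.
  case: (ltgtP A 0) => hA; last by move: hA0; rewrite hA eqxx.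
  - have : Num.sg a = -1 by rewrite hsg ltr0_sg.
    move/eqP; rewrite sgr_cp0 => ha; nra.
  - have : Num.sg a = 1 by rewrite hsg gtr0_sg.
    move/eqP; rewrite sgr_cp0 => ha; nra.
have hij := hP i j; rewrite -/A in hij.
have hba : 0 < b i * b j * a.
  have e : (b i * b j * a) * (b i * b j * A) = a * A.
    transitivity ((b i * b i) * (b j * b j) * (a * A)); first by ring.
    by rewrite !hb !mul1r.
  by rewrite -(pmulr_lgt0 _ hij) e.
set w := U i + a *: U j.
have hww : 0 < inner w w.
  rewrite /w !(innerDl, innerDr, innerZl, innerZr) hAi hAj hji -/A; nra.
have hc : 0 < (vnorm w)^-1 by rewrite invr_gt0 /vnorm sqrtr_gt0.
have key : forall m, m != i -> 0 < b i * b m * inner w (U m).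
  move=> m _; rewrite /w innerDl innerZl.
  have := hP i m; have := hP j m.
  have e : b i * b m * (inner (U i) (U m) + a * inner (U j) (U m)) =
    b i * b m * inner (U i) (U m) + (b i * b j * a) * (b j * b m * inner (U j) (U m)).
    transitivity (b i * b m * inner (U i) (U m) + (b j * b j) * ((b i * b m) * a * inner (U j) (U m))); first by rewrite hb mul1r; ring.
    by ring.
  rewrite e => h3 h4; by apply: addr_gt0 => //; apply: mulr_gt0.
rewrite /interact; case: eqP => [->|/eqP nk]; case: eqP => [->|/eqP nl].
- rewrite !(innerZl, innerZr) -/w.
  rewrite [X in 0 < X](_ : _ = (b i * b i) * ((vnorm w)^-1 * (vnorm w)^-1 * inner w w)); last by ring.
  by rewrite hb mul1r; apply: mulr_gt0 => //; apply: mulr_gt0.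
- rewrite !(innerZl, innerZr) -/w.
  rewrite [X in 0 < X](_ : _ = (vnorm w)^-1 * (b i * b l * inner w (U l))); last by ring.
  by apply: mulr_gt0 => //; exact: key.
- rewrite !(innerZl, innerZr) -/w innerC.
  rewrite [X in 0 < X](_ : _ = (vnorm w)^-1 * (b i * b k * inner w (U k))); last by ring.
  by apply: mulr_gt0 => //; exact: key.
- exact: hpos.
Qed.
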